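(* Let $q$ be a power of a prime $p$ and let $X\subset\mathbb{P}^n$ be a Frobenius nonclassical hypersurface over $\mathbb{F}_q$ of degree $d\not\equiv 0\pmod p$. Then $X$ meets every line $L\subset\mathbb{P}^n$ defined over $\mathbb{F}_q$ in at least one $\mathbb{F}_q$-point.
   Context: A hypersurface $X=\{F=0\}$ over $\mathbb{F}_q$ is Frobenius nonclassical if $F$ divides $\sum_{i=0}^n x_i^q\frac{\partial F}{\partial x_i}$. *)

(* Defs.v *)
From HB Require Import structures.
From mathcomp Require Import all_boot all_order all_algebra all_field.
From mathcomp Require Import mpoly.
Set Implicit Arguments. Unset Strict Implicit. Unset Printing Implicit Defensive.
Import GRing.Theory.
Local Open Scope ring_scope.

Definition frobenius_nonclassical (n : nat) (K : finFieldType) (F : {mpoly K[n]}) : Prop :=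
  exists G : {mpoly K[n]},
    \sum_(i < n) 'X_i ^+ #|K| * mderiv i F = G * F.

(* u, v in K^(n+1) are linearly independent: they span an F_q-rational line of P^n. *)
Definition lin_indep2 (n : nat) (K : fieldType) (u v : 'I_n -> K) : Prop :=
  forall a b : K, (forall i, a * u i + b * v i = 0) -> a = 0 /\ b = 0.

(* Main.v *)
Require Import Defs.
From HB Require Import structures.
From mathcomp Require Import all_boot all_order all_algebra all_field all_solvable.
From mathcomp Require Import mpoly ring zify.
Set Implicit Arguments. Unset Strict Implicit. Unset Printing Implicit Defensive.
Import GRing.Theory.
Local Open Scope ring_scope.

Section S.
Variables (K : fieldType) (n : nat) (u v : 'I_n -> K).
Definition hh (i : 'I_n) : {poly K} := (u i)%:P * 'X + (v i)%:P.
Definition phi (P : {mpoly K[n]}) : {poly K} := mmap (@polyC K) hh P.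
Lemma phiM P Q : phi (P * Q) = phi P * phi Q.
Proof. by rewrite /phi rmorphM. Qed.
Lemma phiD P Q : phi (P + Q) = phi P + phi Q.
Proof. by rewrite /phi rmorphD. Qed.
Lemma phiX i : phi 'X_i = hh i.
Proof. by rewrite /phi mmapX mmap1U. Qed.
Lemma phiC c : phi c%:MP = c%:P.
Proof. by rewrite /phi mmapC. Qed.
Lemma phi0 : phi 0 = 0.
Proof. by rewrite /phi raddf0. Qed.
Lemma phi1 : phi 1 = 1.
Proof. by rewrite /phi rmorph1. Qed.
Lemma phi_horner P x : (phi P).[x] = P.@[fun i => x * u i + 1 * v i].
Proof.
rewrite /phi /mmap mevalE horner_sum; apply: eq_bigr => m _.
rewrite hornerM hornerC /mmap1 horner_prod; congr (_ * _); apply: eq_bigr => i _.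
by rewrite !hornerE mulrC.
Qed.

Lemma coefM_top (P Q : {poly K}) a b : (size P <= a.+1)%N -> (size Q <= b.+1)%N ->
  (P * Q)`_(a + b)%N = P`_a * Q`_b.
Proof.
move=> sP sQ.
have ha : (a < (a + b).+1)%N by rewrite ltnS leq_addr.
rewrite coefM (bigD1 (Ordinal ha)) //= addKn big1 ?addr0 // => j /eqP neq.
case: (ltngtP j a) => [lt|gt|eq].
- rewrite [Q`__]nth_default ?mulr0 //; apply: leq_trans sQ _; lia.
- by rewrite nth_default ?mul0r //; apply: leq_trans sP _.
- by exfalso; apply: neq; apply: val_inj.
Qed.

Lemma sizeM_top (P Q : {poly K}) a b : (size P <= a.+1)%N -> (size Q <= b.+1)%N ->
  (size (P * Q)%R <= (a + b).+1)%N.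
Proof.
move=> sP sQ; apply: leq_trans (size_mul_leq _ _) _; lia.
Qed.

Lemma expr_top (A : {poly K}) k : (size A <= 2)%N ->
  (size (A ^+ k)%R <= k.+1)%N /\ (A ^+ k)`_k = A`_1 ^+ k.
Proof.
move=> sA; elim: k => [|k [IH1 IH2]].
  by rewrite !expr0 size_poly1 coefC.
rewrite !exprS -[k.+1]/(1 + k)%N; split; first exact: sizeM_top.
by rewrite coefM_top // IH2.
Qed.

Lemma prod_top (I : Type) (s : seq I) (A : I -> {poly K}) (e : I -> nat) :
  (forall i, size (A i) <= 2)%N ->
  (size (\prod_(i <- s) A i ^+ e i)%R <= (\sum_(i <- s) e i).+1)%N /\
  (\prod_(i <- s) A i ^+ e i)`_(\sum_(i <- s) e i)%N = \prod_(i <- s) (A i)`_1 ^+ e i.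
Proof.
move=> sA; elim: s => [|i s [IH1 IH2]].
  by rewrite !big_nil size_poly1 coefC.
have [E1 E2] := expr_top (e i) (sA i).
rewrite !big_cons; split; first exact: sizeM_top.
by rewrite coefM_top // E2 IH2.
Qed.

Lemma size_hh i : (size (hh i) <= 2)%N.
Proof.
rewrite /hh; apply: leq_trans (size_polyD _ _) _; rewrite geq_max; apply/andP; split.
  by apply: leq_trans (size_mul_leq _ _) _; rewrite size_polyX; have := size_polyC_leq1 (u i); lia.
by apply: leq_trans (size_polyC_leq1 _) _.
Qed.

Lemma coef_hh i : (hh i)`_1 = u i.
Proof. by rewrite /hh coefD coefCM coefX coefC /= mulr1 addr0. Qed.

Lemma phi_top d P : P \is d.-homog -> (phi P)`_d = P.@[u].
Proof.
move=> /dhomogP hom.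
rewrite /phi /mmap mevalE coef_sum; apply: eq_big_seq => m Hm.
rewrite coefCM /mmap1; congr (_ * _).
have [_ E] := prod_top (index_enum 'I_n) (fun i => m i) size_hh.
have Hd : mdeg m = d := hom m Hm.
have -> : d = (\sum_i m i)%N by rewrite -Hd mdegE.
rewrite E; apply: eq_bigr => i _; by rewrite coef_hh.
Qed.


Definition chain (P : {mpoly K[n]}) :=
  (phi P)^`() = \sum_i (u i)%:P * phi (P^`M(i)).

Lemma chainD P Q : chain P -> chain Q -> chain (P + Q).
Proof.
rewrite /chain => HP HQ; rewrite phiD derivD HP HQ -big_split /=.
by apply: eq_bigr => i _; rewrite mderivD phiD mulrDr.
Qed.

Lemma chainM P Q : chain P -> chain Q -> chain (P * Q).
Proof.
rewrite /chain => HP HQ; rewrite phiM derivM HP HQ mulr_suml mulr_sumr -big_split /=.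
by apply: eq_bigr => i _; rewrite mderivM phiD !phiM; ring.
Qed.

Lemma chainC c : chain c%:MP.
Proof.
rewrite /chain phiC derivC big1 // => i _.
by rewrite mderivC phi0 mulr0.
Qed.

Lemma chainX i : chain 'X_i.
Proof.
rewrite /chain phiX /hh derivD derivC derivM derivC derivX mul0r add0r addr0 mulr1.
rewrite (bigD1 i) //= big1 ?addr0.
  rewrite mderivX mnm1E eqxx /=.
  have -> : (U_(i) - U_(i))%MM = 0%MM by apply/mnmP => j; rewrite mnmBE subnn mnm0E.
  by rewrite mpolyX0 scale1r phi1 mulr1.
move=> j /negbTE ne; rewrite mderivX mnm1E eq_sym ne /= scale0r phi0 mulr0 //.
Qed.

Lemma chain_all P : chain P.
Proof.
elim/mpolyind: P => [|c m p _ _ Hp].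
  by rewrite -mpolyC0; apply: chainC.
apply: chainD => //; rewrite -mul_mpolyC; apply: chainM; first exact: chainC.
rewrite mpolyXE_id; apply: (big_ind chain); first by rewrite -mpolyC1; apply: chainC.
  exact: chainM.
move=> i _; elim: (m i) => [|k IH]; first by rewrite expr0 -mpolyC1; apply: chainC.
by rewrite exprS; apply: chainM => //; apply: chainX.
Qed.

End S.

Lemma euler_mono (K : fieldType) n (m : 'X_{1..n}) :
  \sum_(i < n) 'X_i * ('X_[m] : {mpoly K[n]})^`M(i) = 'X_[m] *+ mdeg m.
Proof.
have E : forall i : 'I_n, 'X_i * ('X_[m] : {mpoly K[n]})^`M(i) = (m i)%:R *: 'X_[m].
  move=> i; rewrite mderivX -scalerAr.
  case: (posnP (m i)) => [->|pos]; first by rewrite !scale0r.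
  congr (_ *: _); rewrite -mpolyXD; congr 'X_[_]; apply/mnmP => j.
  rewrite mnmDE mnmBE mnm1E; case: eqP => [<-|_] /=; lia.
rewrite (eq_bigr _ (fun i _ => E i)) -scaler_suml -natr_sum -mdegE.
by rewrite scaler_nat.
Qed.

Lemma euler (K : fieldType) n d (P : {mpoly K[n]}) : P \is d.-homog ->
  \sum_(i < n) 'X_i * P^`M(i) = P *+ d.
Proof.
move=> /dhomogP hom.
rewrite [in RHS](mpolyE P) -sumrMnl.
transitivity (\sum_(i < n) 'X_i * (\sum_(m <- msupp P) P@_m *: 'X_[m])^`M(i)).
  by rewrite -mpolyE.
under eq_bigr do rewrite raddf_sum mulr_sumr.
rewrite exchange_big /=; apply: eq_big_seq => m Hm.
have Hd : mdeg m = d := hom m Hm.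
rewrite -Hd scalerMnr -euler_mono scaler_sumr; apply: eq_bigr => i _.
by rewrite mderivZ scalerAr.
Qed.

Lemma phi_sum (K : fieldType) n (u v : 'I_n -> K) (f : 'I_n -> {mpoly K[n]}) :
  phi u v (\sum_i f i) = \sum_i phi u v (f i).
Proof. by rewrite /phi raddf_sum. Qed.

Lemma phiXn (K : fieldType) n (u v : 'I_n -> K) P k :
  phi u v (P ^+ k) = phi u v P ^+ k.
Proof. by rewrite /phi rmorphXn. Qed.

Lemma phiMn (K : fieldType) n (u v : 'I_n -> K) P k :
  phi u v (P *+ k) = phi u v P *+ k.
Proof. by rewrite /phi raddfMn. Qed.

Lemma frob_hh (K : finFieldType) (p : nat) (c e : K) : p \in [pchar K] ->
  (c%:P * 'X + e%:P) ^+ #|K| = c%:P * 'X^#|K| + e%:P :> {poly K}.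
Proof.
move=> Hp.
have Hn : [pchar {poly K}].-nat #|K|.
  rewrite (eq_pnat _ (@pchar_poly K)) (eq_pnat _ (pcharf_eq Hp)).
  by have := abelem_pgroup (fin_ring_pchar_abelem Hp); rewrite /pgroup cardsT.
by rewrite exprDn_pchar // exprMn -!(rmorphXn (@polyC K)) !expf_card.
Qed.

Lemma peel (K : fieldType) (g Q : {poly K}) (s : seq K) : (forall x, ~~ root g x) ->
  g %| (\prod_(x <- s) ('X - x%:P)) * Q -> g %| Q.
Proof.
move=> nr; elim: s Q => [|x s IH] Q; first by rewrite big_nil mul1r.
rewrite big_cons -mulrA Gauss_dvdpr ?coprimep_XsubC ?nr //; exact: IH.
Qed.

Unset Implicit Arguments.

Theorem corollary2p3 (K : finFieldType) (p n d : nat) (F : {mpoly K[n.+1]}) :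
  p \in [pchar K] ->
  F != 0 -> F \is d.-homog -> ~~ (p %| d)%N ->
  frobenius_nonclassical F ->
  forall u v : 'I_n.+1 -> K, lin_indep2 u v ->
  exists a b : K, (a != 0 \/ b != 0) /\ F.@[fun i => a * u i + b * v i] = 0.
Proof.
move=> Hp _ Hhom Hd [G HG] u v _.
set q := #|K|.
pose g := phi u v F.
case: (boolP [exists x : K, root g x]) => [/existsP [x Hx]|noroot].
  exists x, 1; split; first by right; apply: oner_neq0.
  by rewrite -phi_horner; apply/eqP.
have nr : forall x, ~~ root g x.
  by move=> x; apply/negP => Hx; move/negP: noroot; apply; apply/existsP; exists x.
case: (eqVneq F.@[u] 0) => [Fu0|Fun0].
  exists 1, 0; split; first by left; exact: oner_neq0.
  rewrite -[RHS]Fu0 !mevalE; apply: eq_bigr => m _; congr (_ * _); apply: eq_bigr => i _.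
  by rewrite mul1r mul0r addr0.
exfalso.
have dpos : (0 < d)%N by case: d Hd Hhom => //; rewrite dvdn0.
have gnz : g != 0.
  by apply/negP => /eqP g0; have := nr 0; rewrite g0 root0.
have E1 : \sum_i hh u v i ^+ q * phi u v (F^`M(i)) = phi u v G * g.
  rewrite -phiM -HG phi_sum; apply: eq_bigr => i _.
  by rewrite phiM phiXn phiX.
have E2 : \sum_i hh u v i * phi u v (F^`M(i)) = g *+ d.
  rewrite -phiMn -(euler Hhom) phi_sum; apply: eq_bigr => i _.
  by rewrite phiM phiX.
have key : ('X^q - 'X) * g^`() = (phi u v G - d%:R) * g.
  rewrite chain_all mulr_sumr.
  transitivity (\sum_i (hh u v i ^+ q * phi u v (F^`M(i)) - hh u v i * phi u v (F^`M(i)))).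
    apply: eq_bigr => i _; rewrite /hh (frob_hh _ _ Hp); ring.
  by rewrite sumrB E1 E2 mulrBl mulr_natl.
have dv : g %| ('X^q - 'X) * g^`() by rewrite key dvdp_mull.
rewrite finField_genPoly in dv.
have dv2 := peel nr dv.
have g'0 : g^`() = 0.
  apply/eqP; apply/negPn/negP => nz.
  have H1 := dvdp_leq nz dv2; have H2 := lt_size_deriv gnz; have := leq_trans H2 H1; by rewrite ltnn.
have := congr1 (fun P : {poly K} => P`_d.-1) g'0.
rewrite coef_deriv prednK // coef0 (phi_top _ _ Hhom) => /eqP.
by rewrite -mulr_natr mulf_eq0 (negbTE Fun0) /= -(dvdn_pcharf Hp) (negbTE Hd).
Qed.
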